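(* Let $P=\{x\in\mathbb R^3:(a^i)^\intercal x\le b_i,\ 1\le i\le n\}$ be a 3-dimensional polytope centrally symmetric with respect to the origin, where $b_i>0$ and each inequality defines a facet $F_i$ with supporting hyperplane $H_i=\{x:(a^i)^\intercal x=b_i\}$. For indices $i_1,\dots,i_6$ let $A_{i_1,\dots,i_6}\in\mathbb R^{6\times 9}$ be the matrix with rows $((a^{i_1})^\intercal,0,0)$, $(0,(a^{i_2})^\intercal,0)$, $(0,0,(a^{i_3})^\intercal)$, $(0,(a^{i_4})^\intercal,-(a^{i_4})^\intercal)$, $(-(a^{i_5})^\intercal,0,(a^{i_5})^\intercal)$, $((a^{i_6})^\intercal,-(a^{i_6})^\intercal,0)$, and let $\mathcal S$ be the set of matrices $W=(w^1,w^2,w^3)\in\mathbb R^{3\times3}$ with $A_{i_1,\dots,i_6}(w^1;w^2;w^3)=(b_{i_1},\dots,b_{i_6})^\intercal$. If $\mathrm{rank}(A_{i_1,\dots,i_6})<6$, then the function $f(W)=|\det W|$ on $\mathcal S$ has no local minimum $W\in\mathcal S$ with $f(W)>0$. *)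

(* Defs.v *)
From HB Require Import structures.
From mathcomp Require Import all_boot all_order all_algebra.
From mathcomp Require Import reals.
Set Implicit Arguments. Unset Strict Implicit. Unset Printing Implicit Defensive.
Import Order.TTheory GRing.Theory Num.Theory.
Local Open Scope ring_scope.

Section Defs.
Variable R : realType.

Definition dot3 (u v : 'rV[R]_3) : R := (u *m v^T) 0 0.

Definition Hpolyhedron (n : nat) (a : 'I_n -> 'rV[R]_3) (b : 'I_n -> R) (x : 'rV[R]_3) : Prop :=
  forall i, dot3 (a i) x <= b i.

(* S has affine dimension >= k : it contains k+1 affinely independent points *)
Definition aff_dim_ge (S : 'rV[R]_3 -> Prop) (k : nat) : Prop :=
  exists p : 'I_k.+1 -> 'rV[R]_3,
    (forall j, S (p j)) /\ row_free (\matrix_(j < k) (p (lift ord0 j) - p ord0)).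

Definition bounded3 (S : 'rV[R]_3 -> Prop) : Prop :=
  exists M : R, forall x, S x -> forall j, `|x 0 j| <= M.

Definition centrally_symmetric (S : 'rV[R]_3 -> Prop) : Prop :=
  forall x, S x -> S (- x).

Definition faceP n (a : 'I_n -> 'rV[R]_3) (b : 'I_n -> R) (i : 'I_n) (x : 'rV[R]_3) : Prop :=
  Hpolyhedron a b x /\ dot3 (a i) x = b i.

(* F_i is a facet of the 3-dimensional polytope P: it has dimension 2
   (it lies in the hyperplane H_i, so dimension >= 2 means dimension = 2) *)
Definition is_facet n (a : 'I_n -> 'rV[R]_3) (b : 'I_n -> R) (i : 'I_n) : Prop :=
  aff_dim_ge (faceP a b i) 2.

(* rows of A_{i1,...,i6}; idx r is i_{r+1} *)
Definition Arow n (a : 'I_n -> 'rV[R]_3) (idx : 'I_6 -> 'I_n) (r : 'I_6)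
    : 'rV[R]_(3 + 3 + 3) :=
  let v := a (idx r) in
  match val r with
  | 0 => row_mx (row_mx v 0) 0
  | 1 => row_mx (row_mx 0 v) 0
  | 2 => row_mx (row_mx 0 0) v
  | 3 => row_mx (row_mx 0 v) (- v)
  | 4 => row_mx (row_mx (- v) 0) v
  | _ => row_mx (row_mx v (- v)) 0
  end.

Definition Amat n (a : 'I_n -> 'rV[R]_3) (idx : 'I_6 -> 'I_n) : 'M[R]_(6, 3 + 3 + 3) :=
  \matrix_(r < 6) Arow a idx r.

Definition vecW (W : 'M[R]_3) : 'cV[R]_(3 + 3 + 3) :=
  col_mx (col_mx (col (inord 0) W) (col (inord 1) W)) (col (inord 2) W).

Definition inS n (a : 'I_n -> 'rV[R]_3) (b : 'I_n -> R) (idx : 'I_6 -> 'I_n) (W : 'M[R]_3) : Prop :=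
  Amat a idx *m vecW W = \col_(r < 6) b (idx r).

(* W is a local minimum of f on the set S (Euclidean topology on R^{3x3},
   expressed with the equivalent max-norm balls) *)
Definition local_min_on (S : 'M[R]_3 -> Prop) (f : 'M[R]_3 -> R) (W : 'M[R]_3) : Prop :=
  S W /\ exists eps : R, 0 < eps /\
    forall W', S W' -> (forall p q, `|W' p q - W p q| < eps) -> f W <= f W'.

End Defs.

(* Main.v *)
Require Import Defs.
From HB Require Import structures.
From mathcomp Require Import all_boot all_order all_algebra.
From mathcomp Require Import reals.
From mathcomp Require Import ring lra.
Import Order.TTheory GRing.Theory Num.Theory.
Local Open Scope ring_scope.

Lemma det3f (R : comNzRingType) (f : nat -> nat -> R) : \det (\matrix_(i < 3, j < 3) f i j) =
  f 0 0 * (f 1 1 * f 2 2 - f 1 2 * f 2 1)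
  - f 0 1 * (f 1 0 * f 2 2 - f 1 2 * f 2 0)
  + f 0 2 * (f 1 0 * f 2 1 - f 1 1 * f 2 0).
Proof.
rewrite (expand_det_row _ 0) !big_ord_recl big_ord0 /=.
rewrite /cofactor !(expand_det_row _ 0) !big_ord_recl !big_ord0 /=.
rewrite /cofactor !det_mx11 !mxE /=.
rewrite /bump /=. rewrite !(add0n, addn0) ?addn1 expr2 mulrNN. ring.
Qed.

Lemma lt1_norm (R : realType) (g : R) : -2 < g -> g < 0 -> `|1 + g| < 1.
Proof. move=> h1 h2; rewrite ltr_norml; apply/andP; split; lra. Qed.

Lemma small_u (R : realType) (e : R) : 0 < e -> exists u : R, [/\ 0 < u, u < 1 & u < e].
Proof.
move=> he; exists (e / (1 + e)).
have h1 : 0 < 1 + e by lra.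
have E : e / (1 + e) * (1 + e) = e by rewrite divfK // gt_eqF.
split.
- by rewrite divr_gt0.
- rewrite ltr_pdivrMr //; lra.
- rewrite ltr_pdivrMr //; nra.
Qed.

Lemma poly_min (R : realType) (ta sg de e : R) : 0 < e ->
  (forall t, `|t| < e -> 1 <= `|1 + (ta * t + sg * t ^+ 2 + de * t ^+ 3)|) ->
  ta = 0 /\ 0 <= sg.
Proof.
move=> he H; have [u [u0 u1 ue]] := @small_u R e he.
have partA : ta = 0.
  apply/eqP; apply/negP => /negP tan0.
  pose a := `|sg|; pose c := `|de| * `|ta|.
  have a0 : 0 <= a by exact: normr_ge0.
  have c0 : 0 <= c by rewrite mulr_ge0.
  have ta0 : 0 < `|ta| by rewrite normr_gt0.
  pose K := 1 + `|ta| + ta ^+ 2 + 2 * a + 2 * c.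
  have sq0 : 0 <= ta ^+ 2 by rewrite sqr_ge0.
  have K0 : 0 < K by rewrite /K; lra.
  pose h := u / K.
  have hK : h * K = u by rewrite /h divfK // gt_eqF.
  have h0 : 0 < h by rewrite /h divr_gt0.
  clearbody h.
  have hu : h <= u.
    have : 0 <= h * (K - 1) by apply: mulr_ge0; rewrite /K; lra.
    nra.
  have Htah : `|ta| * h < e.
    have : 0 <= h * (K - `|ta|) by apply: mulr_ge0; rewrite /K; lra.
    nra.
  have HY : 0 < ta ^+ 2 * h < 1.
    apply/andP; split; first by rewrite mulr_gt0 // lt0r sqrf_eq0 tan0 sqr_ge0.
    have : 0 <= h * (K - ta ^+ 2) by apply: mulr_ge0; rewrite /K; lra.
    nra.
  pose X := sg * h - de * ta * h ^+ 2.
  have HX : `|X| <= a * h + c * h.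
    apply: (le_trans (ler_normB _ _)).
    rewrite !normrM (gtr0_norm h0) /a /c.
    have : `|de| * `|ta| * h ^+ 2 <= `|de| * `|ta| * h.
      apply: ler_wpM2l; first by rewrite mulr_ge0.
      rewrite expr2; apply: (@le_trans _ _ (h * 1)); last by rewrite mulr1.
      apply: ler_wpM2l; lra.
    lra.
  have HX2 : a * h + c * h <= 1 / 2.
    have : 0 <= h * (K - 2 * a - 2 * c) by apply: mulr_ge0; rewrite /K; lra.
    nra.
  have HXb : -(1/2) <= X <= 1/2.
    rewrite -ler_norml; lra.
  have := H (- (ta * h)).
  rewrite normrN normrM (gtr0_norm h0) Htah => /(_ isT).
  have -> : ta * - (ta * h) + sg * (- (ta * h)) ^+ 2 + de * (- (ta * h)) ^+ 3
     = ta ^+ 2 * h * (-1 + X) by rewrite /X; ring.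
  move: HY HXb; clearbody X; move: (ta ^+ 2 * h) => Y /andP[Y0 Y1] /andP[X0 X1] HH2.
  suff : `|1 + Y * (-1 + X)| < 1 by rewrite ltNge HH2.
  have p1 : 0 <= Y * (X + 1/2) by apply: mulr_ge0; lra.
  have p2 : 0 <= Y * (1/2 - X) by apply: mulr_ge0; lra.
  apply: (@lt1_norm R); lra.
split => //.
rewrite leNgt; apply/negP => sg0.
pose K := 1 + 2 * `|de| - sg + sg ^+ 2.
have d0 : 0 <= `|de| by exact: normr_ge0.
have sq0 : 0 <= sg ^+ 2 by rewrite sqr_ge0.
have K0 : 0 < K by rewrite /K; lra.
pose t := u * (- sg) / K.
have tK : t * K = u * (- sg) by rewrite /t divfK // gt_eqF.
have t0 : 0 < t by rewrite /t divr_gt0 // mulr_gt0 //; lra.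
have tu : t < u.
  have : 0 < t * (K + sg) by apply: mulr_gt0 => //; rewrite /K; nra.
  nra.
have td : 2 * `|de| * t <= - sg.
  have : 0 <= t * (K - 2 * `|de|) by apply: mulr_ge0; rewrite /K; nra.
  nra.
have ts : t * (- sg) < 1.
  have : 0 <= t * (K - sg ^+ 2) by apply: mulr_ge0; rewrite /K; nra.
  nra.
have := H t; rewrite (gtr0_norm t0) => /(_ (lt_trans tu ue)).
rewrite partA mul0r add0r.
have -> : sg * t ^+ 2 + de * t ^+ 3 = t ^+ 2 * (sg + de * t) by ring.
have n1 : de <= `|de| := ler_norm de.
have n2 : - de <= `|de| by rewrite -normrN ler_norm.
have q1 : 0 <= t * (`|de| - de) by apply: mulr_ge0; lra.
have q2 : 0 <= t * (`|de| + de) by apply: mulr_ge0; lra.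
have T1 : t ^+ 2 * (- sg) < 1.
  have : t * (t * - sg) < t * 1 by rewrite ltr_pM2l //; lra.
  rewrite expr2 -mulrA mulr1; lra.
have T0 : 0 < t ^+ 2 by rewrite exprn_gt0.
have Zl : 3 / 2 * sg <= sg + de * t by lra.
have Zr : sg + de * t <= sg / 2 by lra.
move: Zl Zr T1 T0; clearbody t; move: (sg + de * t) (t ^+ 2) => Z T Zl Zr T1 T0 HH2.
suff : `|1 + T * Z| < 1 by rewrite ltNge HH2.
have r1 : 0 <= T * (Z - 3 / 2 * sg) by apply: mulr_ge0; lra.
have r2 : 0 < T * (- Z) by apply: mulr_gt0; lra.
apply: (@lt1_norm R); lra.
Qed.

Definition sidx (i j : nat) : nat :=
  match i, j with
  | 0, 0 => 0 | 1, 1 => 1 | 2, 2 => 2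
  | 0, 1 | 1, 0 => 3 | 0, 2 | 2, 0 => 4 | _, _ => 5 end.

Definition sf (R : realType) (s : 'cV[R]_6) (i j : nat) : R := s (inord (sidx i j)) 0.
Definition symM (R : realType) (s : 'cV[R]_6) : 'M[R]_3 := \matrix_(i < 3, j < 3) @sf R s i j.
Definition gf (R : realType) (t : R) (s : 'cV[R]_6) (i j : nat) : R :=
  (i == j)%:R + t * @sf R s i j.
Arguments sf {R} s i j.
Arguments symM {R} s.
Arguments gf {R} t s i j.

Lemma symMD (R : realType) (s1 s2 : 'cV[R]_6) : symM (s1 + s2) = symM s1 + symM s2.
Proof. by apply/matrixP => i j; rewrite !mxE /sf !mxE. Qed.

Lemma symMZ (R : realType) c (s : 'cV[R]_6) : symM (c *: s) = c *: symM s.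
Proof. by apply/matrixP => i j; rewrite !mxE /sf !mxE. Qed.

Lemma vecWD (R : realType) (X Y : 'M[R]_3) : vecW (X + Y) = vecW X + vecW Y.
Proof. by rewrite /vecW !linearD /= !add_col_mx. Qed.

Lemma vecWZ (R : realType) c (X : 'M[R]_3) : vecW (c *: X) = c *: vecW X.
Proof. by rewrite /vecW !linearZ /= !scale_col_mx. Qed.

Lemma linrep (R : realType) m n (g : 'cV[R]_m -> 'cV[R]_n) :
  (forall x y, g (x + y) = g x + g y) -> (forall c x, g (c *: x) = c *: g x) ->
  forall s, g s = (\matrix_(i, k) g (delta_mx k 0) i 0) *m s.
Proof.
move=> gD gZ s.
have g0 : g 0 = 0 by rewrite -(scale0r (0 : 'cV[R]_m)) gZ scale0r.
have -> : s = \sum_(k < m) s k 0 *: delta_mx k 0.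
  rewrite {1}(matrix_sum_delta s); apply: eq_bigr => k _.
  by rewrite big_ord1.
rewrite (big_morph g gD g0).
apply/matrixP => i j; rewrite (ord1 j) summxE mxE.
apply: eq_bigr => k _; rewrite gZ !mxE.
rewrite summxE (bigD1 k) //= big1 ?addr0.
  by rewrite !mxE !eqxx mulr1 mulrC.
by move=> l lk; rewrite !mxE eq_sym (negPf lk) mulr0.
Qed.
Arguments linrep {R m n} g.

Lemma det_poly (R : realType) (W : 'M[R]_3) (s : 'cV[R]_6) (t : R) :
  \det (W + t *: (W *m symM s)) = \det W * (1 +
   ((s (inord 0) 0 + s (inord 1) 0 + s (inord 2) 0) * t
   + (s (inord 0) 0 * s (inord 1) 0 - s (inord 3) 0 ^+ 2
      + s (inord 0) 0 * s (inord 2) 0 - s (inord 4) 0 ^+ 2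
      + s (inord 1) 0 * s (inord 2) 0 - s (inord 5) 0 ^+ 2) * t ^+ 2
   + \det (symM s) * t ^+ 3)).
Proof.
have -> : W + t *: (W *m symM s) = W *m (\matrix_(i < 3, j < 3) gf t s i j).
  rewrite scalemxAr -{1}[W]mulmx1 -mulmxDr; congr (_ *m _).
  by apply/matrixP => i j; rewrite !mxE.
rewrite det_mulmx; congr (_ * _).
rewrite /symM !det3f /gf /sf /=.
ring.
Qed.

Lemma le_sum1 (R : realType) (I : finType) (F : I -> R) i :
  (forall j, 0 <= F j) -> F i <= \sum_j F j.
Proof.
move=> F0; rewrite (bigD1 i) //= lerDl; exact: sumr_ge0.
Qed.
Arguments le_sum1 {R I} F i.
Arguments lt1_norm {R} g.
Arguments poly_min {R} ta sg de e.

Theorem lemma4p1 (R : realType) (n : nat) (a : 'I_n -> 'rV[R]_3) (b : 'I_n -> R)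
  (hb : forall i, 0 < b i)
  (hdim : aff_dim_ge (Hpolyhedron a b) 3)
  (hbdd : bounded3 (Hpolyhedron a b))
  (hsym : centrally_symmetric (Hpolyhedron a b))
  (hfacet : forall i, is_facet a b i)
  (idx : 'I_6 -> 'I_n)
  (hrank : (\rank (Amat a idx) < 6)%N) :
  ~ exists W : 'M[R]_3,
      local_min_on (inS a b idx) (fun W' => `|\det W'|) W /\ 0 < `|\det W|.
Proof.
move=> [W [[inSW [eps [eps0 Hmin]]] detpos]].
pose h (s : 'cV[R]_6) := vecW (W *m symM s).
have hD : forall x y, h (x + y) = h x + h y.
  by move=> x y; rewrite /h symMD mulmxDr vecWD.
have hZ : forall c x, h (c *: x) = c *: h x.
  by move=> c x; rewrite /h symMZ -scalemxAr vecWZ.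
have hC := linrep h hD hZ.
move: hC; set C := \matrix_(i, k) h (delta_mx k 0) i 0 => hC.
have rk : (\rank (Amat a idx *m C) < 6)%N := leq_ltn_trans (mxrankM_maxl _ _) hrank.
have det0 : \det (Amat a idx *m C)^T == 0.
  rewrite det_tr; apply/negPn/negP => dn0.
  by move: rk; rewrite mxrank_unit ?ltnn // unitmxE unitfE.
have [v v0 vB] := det0P det0.
pose s := v^T.
have As : Amat a idx *m h s = 0.
  by rewrite hC mulmxA -[X in X *m _]trmxK -trmx_mul vB trmx0.
have s0 : s != 0.
  apply: contraNneq v0 => e; by rewrite -[v]trmxK -/s e trmx0.
pose D := W *m symM s.
pose K := 1 + \sum_p \sum_q `|D p q|.
have DK : forall p q, `|D p q| <= K.
  move=> p q; apply: (@le_trans _ _ (\sum_p \sum_q `|D p q|)); last by rewrite /K lerDr.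
  apply: (@le_trans _ _ (\sum_q `|D p q|)); first by apply: le_sum1.
  by apply: (le_sum1 (fun p => \sum_q `|D p q|)) => j; exact: sumr_ge0.
have S0 : 0 <= \sum_p \sum_q `|D p q|.
  by apply: sumr_ge0 => p _; apply: sumr_ge0.
have K0 : 0 < K by rewrite /K; lra.
clearbody K.
pose e := eps / K.
have e0 : 0 < e by rewrite /e divr_gt0.
have eK : e * K = eps by rewrite /e divfK // gt_eqF.
clearbody e.
have As' : Amat a idx *m vecW D = 0 := As.
have Ddef : D = W *m symM s by [].
clearbody D.
have Hp : forall t, `|t| < e -> 1 <= `|1 +
   ((s (inord 0) 0 + s (inord 1) 0 + s (inord 2) 0) * t
   + (s (inord 0) 0 * s (inord 1) 0 - s (inord 3) 0 ^+ 2
      + s (inord 0) 0 * s (inord 2) 0 - s (inord 4) 0 ^+ 2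
      + s (inord 1) 0 * s (inord 2) 0 - s (inord 5) 0 ^+ 2) * t ^+ 2
   + \det (symM s) * t ^+ 3)|.
  move=> t ht.
  have inS' : inS a b idx (W + t *: D).
    by rewrite /inS vecWD vecWZ mulmxDr -scalemxAr As' scaler0 addr0.
  have cl : forall p q, `|(W + t *: D) p q - W p q| < eps.
    move=> p q; rewrite !mxE addrAC subrr add0r normrM.
    apply: (@le_lt_trans _ _ (`|t| * K)).
      by apply: ler_wpM2l => //; exact: DK.
    by rewrite -eK ltr_pM2r.
  have := Hmin _ inS' cl.
  by rewrite Ddef det_poly normrM ler_pMr.
have [tau0 sig0] := poly_min _ _ _ _ e0 Hp.
have id : (s (inord 0) 0 + s (inord 1) 0 + s (inord 2) 0) ^+ 2
   - 2 * (s (inord 0) 0 * s (inord 1) 0 - s (inord 3) 0 ^+ 2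
      + s (inord 0) 0 * s (inord 2) 0 - s (inord 4) 0 ^+ 2
      + s (inord 1) 0 * s (inord 2) 0 - s (inord 5) 0 ^+ 2)
   = s (inord 0) 0 ^+ 2 + s (inord 1) 0 ^+ 2 + s (inord 2) 0 ^+ 2
     + 2 * (s (inord 3) 0 ^+ 2 + s (inord 4) 0 ^+ 2 + s (inord 5) 0 ^+ 2).
  by ring.
rewrite tau0 expr0n /= in id.
have q0 := sqr_ge0 (s (inord 0) 0).
have q1 := sqr_ge0 (s (inord 1) 0).
have q2 := sqr_ge0 (s (inord 2) 0).
have q3 := sqr_ge0 (s (inord 3) 0).
have q4 := sqr_ge0 (s (inord 4) 0).
have q5 := sqr_ge0 (s (inord 5) 0).
have Z : forall k, (k < 6)%N -> s (inord k) 0 = 0.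
  move=> k; case: k => [|[|[|[|[|[|k]]]]]] // _; apply/eqP; rewrite -sqrf_eq0; apply/eqP; lra.
move/eqP: s0; apply; apply/matrixP => i j; rewrite (ord1 j) [RHS]mxE.
rewrite -(inord_val i); exact: Z (ltn_ord i).
Qed.
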